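(* Let $m\geq 1$ be an integer. For all integers $n\geq 1$ and all real $x,y\in(0,\pi)$, $$\sum_{k=0}^n \binom{n-k+m}{m}\frac{\sin((2k+1)x)\,\sin((2k+1)y)}{2k+1}>0.$$ The lower bound $0$ is sharp. *)

(* Defs.v *)
From Stdlib Require Export Reals.
Open Scope R_scope.

Definition Ssum (m n : nat) (x y : R) : R :=
  sum_f_R0 (fun k : nat =>
    C (n - k + m) m * sin (INR (2 * k + 1) * x) * sin (INR (2 * k + 1) * y)
      / INR (2 * k + 1)) n.

(* Main.v *)
Require Import Defs.
From Stdlib Require Import Reals Lra Lia.
From Coquelicot Require Import Coquelicot.
Open Scope R_scope.

Lemma deriv_sum (c a : nat -> R) (Ha : forall k, a k <> 0) (N : nat) (t : R) :
  derivable_pt_lim (fun t => sum_f_R0 (fun k => c k * cos (a k * t) / a k) N) t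
    (- sum_f_R0 (fun k => c k * sin (a k * t)) N).
Proof.
  apply is_derive_Reals.
  induction N as [|N IH]; simpl.
  - auto_derive; auto. specialize (Ha 0%nat). field. auto.
  - replace (- (sum_f_R0 (fun k => c k * sin (a k * t)) N + c (S N) * sin (a (S N) * t)))
      with (- sum_f_R0 (fun k => c k * sin (a k * t)) N + (- (c (S N) * sin (a (S N) * t)))) by ring.
    apply (is_derive_plus (fun t => sum_f_R0 (fun k => c k * cos (a k * t) / a k) N)
            (fun t => c (S N) * cos (a (S N) * t) / a (S N))); auto.
    auto_derive; auto. specialize (Ha (S N)). field. auto.
Qed.

Lemma abel (c a : nat -> R) (N : nat) :
  sum_f_R0 (fun k => c k * a k) N =
  sum_f_R0 (fun k => (c k - c (S k)) * sum_f_R0 a k) N + c (S N) * sum_f_R0 a N.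
Proof.
  induction N as [|N IH]; simpl.
  - ring.
  - rewrite IH. ring.
Qed.

Lemma sum_ge_first (f : nat -> R) (N : nat) :
  (forall k, (k <= N)%nat -> 0 <= f k) -> f 0%nat <= sum_f_R0 f N.
Proof.
  induction N as [|N IH]; intros H; simpl.
  - lra.
  - assert (f 0%nat <= sum_f_R0 f N) by (apply IH; intros; apply H; lia).
    assert (0 <= f (S N)) by (apply H; lia). lra.
Qed.

Lemma tele (t : R) (k : nat) :
  sin t * sum_f_R0 (fun i => sin (INR (2 * i + 1) * t)) k = (sin (INR (k + 1) * t))^2.
Proof.
  induction k as [|k IH]; idtac.
  - simpl. rewrite Rmult_1_l. ring.
  - rewrite tech5, Rmult_plus_distr_l, IH.
    set (X := INR (k+1) * t).
    replace (INR (2 * S k + 1) * t) with (2 * X + t) by (unfold X; rewrite !plus_INR, !mult_INR, !S_INR, INR_0; ring).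
    replace (INR (S k + 1) * t) with (X + t) by (unfold X; rewrite !plus_INR, !S_INR, INR_0; ring).
    rewrite !sin_plus.
    replace (2 * X) with (X + X) by ring. rewrite sin_plus, cos_plus.
    pose proof (sin2_cos2 t) as H. unfold Rsqr in H.
    assert (E : (sin X * cos t + cos X * sin t) ^ 2 -
      (sin X ^ 2 + sin t * ((sin X * cos X + cos X * sin X) * cos t + (cos X * cos X - sin X * sin X) * sin t))
      = sin X ^ 2 * (sin t * sin t + cos t * cos t - 1)) by ring.
    rewrite H in E. lra.
Qed.

Lemma C_pos (n p : nat) : 0 < Binomial.C n p.
Proof.
  unfold Binomial.C. apply Rdiv_lt_0_compat. apply INR_fact_lt_0.
  apply Rmult_lt_0_compat; apply INR_fact_lt_0.
Qed.

Lemma C_diff (j m : nat) : (1 <= m)%nat -> Binomial.C (S j + m) m - Binomial.C (j + m) m = Binomial.C (j + m) (m - 1).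
Proof.
  intros Hm. destruct m as [|m']; [lia|].
  replace (S m' - 1)%nat with m' by lia.
  change (S j + S m')%nat with (S (j + S m')).
  rewrite <- (pascal (j + S m') m') by lia. ring.
Qed.

Lemma G_pos (m n : nat) (t : R) : (1 <= m)%nat -> (1 <= n)%nat -> 0 < t < PI ->
  0 < sum_f_R0 (fun k => Binomial.C (n - k + m) m * sin (INR (2 * k + 1) * t)) n.
Proof.
  intros Hm Hn Ht.
  assert (Hs : 0 < sin t) by (apply sin_gt_0; lra).
  apply (Rmult_lt_reg_l (sin t)); auto. rewrite Rmult_0_r.
  rewrite scal_sum.
  set (c := fun k => Binomial.C (n - k + m) m).
  set (a := fun k => sin t * sin (INR (2 * k + 1) * t)).
  replace (sum_f_R0 (fun i => Binomial.C (n - i + m) m * sin (INR (2 * i + 1) * t) * sin t) n)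
    with (sum_f_R0 (fun k => c k * a k) n)
    by (apply sum_eq; intros; unfold c, a; ring).
  rewrite abel.
  assert (HP : forall k, sum_f_R0 a k = (sin (INR (k + 1) * t))^2).
  { intros k. rewrite <- tele. unfold a. rewrite scal_sum. apply sum_eq. intros; ring. }
  assert (Hd : forall k, (k <= n)%nat -> 0 <= c k - c (S k)).
  { intros k Hk. unfold c. destruct (Nat.eq_dec k n) as [->|Hne].
    - replace (n - S n)%nat with 0%nat by lia. replace (n - n)%nat with 0%nat by lia. lra.
    - replace (n - k)%nat with (S (n - S k)) by lia. rewrite C_diff by auto.
      left; apply C_pos. }
  assert (H0 : 0 < c 0%nat - c 1%nat).
  { unfold c. replace (n - 0)%nat with (S (n - 1)) by lia. rewrite C_diff by auto. apply C_pos. }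
  assert (Hpos : 0 < (c 0%nat - c 1%nat) * sum_f_R0 a 0).
  { apply Rmult_lt_0_compat; auto. rewrite HP. simpl (INR (0+1)).
    rewrite Rmult_1_l. apply pow_lt; auto. }
  assert (Hge : (c 0%nat - c 1%nat) * sum_f_R0 a 0 <=
     sum_f_R0 (fun k => (c k - c (S k)) * sum_f_R0 a k) n).
  { apply (sum_ge_first (fun k => (c k - c (S k)) * sum_f_R0 a k)).
    intros k Hk. apply Rmult_le_pos; auto. rewrite HP. apply pow2_ge_0. }
  assert (0 <= c (S n) * sum_f_R0 a n).
  { apply Rmult_le_pos. left; apply C_pos. rewrite HP. apply pow2_ge_0. }
  lra.
Qed.

Definition Fn (m n : nat) (t : R) : R :=
  sum_f_R0 (fun k => Binomial.C (n - k + m) m * cos (INR (2 * k + 1) * t) / INR (2 * k + 1)) n.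

Lemma a_nz (k : nat) : INR (2 * k + 1) <> 0.
Proof. apply not_0_INR. lia. Qed.

Lemma Fn_decr (m n : nat) (u v : R) : (1 <= m)%nat -> (1 <= n)%nat ->
  0 <= u -> u < v -> v <= PI -> Fn m n v < Fn m n u.
Proof.
  intros Hm Hn Hu Huv Hv.
  set (G := fun t => sum_f_R0 (fun k => Binomial.C (n - k + m) m * sin (INR (2 * k + 1) * t)) n).
  assert (HD : forall t, derivable_pt_lim (Fn m n) t (- G t)).
  { intros t. unfold Fn, G.
    apply (deriv_sum (fun k => Binomial.C (n - k + m) m) (fun k => INR (2 * k + 1)) a_nz n t). }
  set (pr := fun t => exist (fun l => derivable_pt_lim (Fn m n) t l) (- G t) (HD t) : derivable_pt (Fn m n) t).
  destruct (MVT_cor1 (Fn m n) u v pr Huv) as [c [Hc Hc2]].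
  assert (E : derive_pt (Fn m n) c (pr c) = - G c) by (apply derive_pt_eq_0; apply HD).
  rewrite E in Hc.
  assert (0 < G c) by (apply G_pos; auto; lra).
  assert (0 < G c * (v - u)) by (apply Rmult_lt_0_compat; lra).
  lra.
Qed.

Lemma Fn_neg (m n : nat) (t : R) : Fn m n (- t) = Fn m n t.
Proof.
  unfold Fn. apply sum_eq. intros. rewrite <- Ropp_mult_distr_r, cos_neg. reflexivity.
Qed.

Lemma Fn_refl (m n : nat) (t : R) : Fn m n (2 * PI - t) = Fn m n t.
Proof.
  unfold Fn. apply sum_eq. intros k _.
  replace (INR (2 * k + 1) * (2 * PI - t)) with (- (INR (2 * k + 1) * t) + 2 * INR (2 * k + 1) * PI) by ring.
  rewrite cos_period, cos_neg. reflexivity.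
Qed.

Lemma Ssum_eq (c a : nat -> R) (Ha : forall k, a k <> 0) (N : nat) (x y : R) :
  sum_f_R0 (fun k => c k * sin (a k * x) * sin (a k * y) / a k) N =
  (sum_f_R0 (fun k => c k * cos (a k * (x - y)) / a k) N -
   sum_f_R0 (fun k => c k * cos (a k * (x + y)) / a k) N) / 2.
Proof.
  assert (T : forall k, c k * sin (a k * x) * sin (a k * y) / a k =
     (c k * cos (a k * (x - y)) / a k - c k * cos (a k * (x + y)) / a k) / 2).
  { intros k. rewrite Rmult_minus_distr_l, Rmult_plus_distr_l, cos_minus, cos_plus.
    field. apply Ha. }
  induction N as [|N IH].
  - simpl. apply T.
  - rewrite !tech5, IH, T. field. apply Ha.
Qed.

Theorem part2 (m : nat) :
  (forall eps : R, 0 < eps ->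
     exists (n : nat) (x y : R), (1 <= n)%nat /\ 0 < x < PI /\ 0 < y < PI /\
       sum_f_R0 (fun k : nat =>
    Binomial.C (n - k + m) m * sin (INR (2 * k + 1) * x) * sin (INR (2 * k + 1) * y)
      / INR (2 * k + 1)) n < eps).
Proof.
  intros eps He.
  set (K := Binomial.C (1 - 0 + m) m). set (K2 := Binomial.C (1 - 1 + m) m).
  assert (HK : 0 < K) by apply C_pos. assert (HK2 : 0 < K2) by apply C_pos.
  assert (HPI := PI_RGT_0).
  set (d := Rmin (PI / 4) (Rmin 1 (eps / (K + 3 * K2)))).
  assert (Hd0 : 0 < d).
  { unfold d. apply Rmin_pos. lra. apply Rmin_pos. lra. apply Rdiv_lt_0_compat; lra. }
  assert (Hd1 : d <= PI / 4) by apply Rmin_l.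
  assert (Hd2 : d <= 1) by (unfold d; eapply Rle_trans; [apply Rmin_r|apply Rmin_l]).
  assert (Hd3 : d <= eps / (K + 3 * K2)) by (unfold d; eapply Rle_trans; [apply Rmin_r|apply Rmin_r]).
  exists 1%nat, d, d. split; [lia|]. split; [lra|]. split; [lra|].
  rewrite tech5. cbn beta.
  change (sum_f_R0 ?f 0) with (f 0%nat). cbn beta. fold K K2.
  replace (INR (2 * 0 + 1)) with 1 by (simpl; ring).
  replace (INR (2 * 1 + 1)) with 3 by (simpl; ring).
  assert (s1 : 0 < sin (1 * d) < 1 * d).
  { split. apply sin_gt_0; lra. apply sin_lt_x. lra. }
  assert (s3 : 0 < sin (3 * d) < 3 * d).
  { split. apply sin_gt_0; lra. apply sin_lt_x. lra. }
  assert (A1 : sin (1 * d) * sin (1 * d) < d * d) by nra.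
  assert (A3 : sin (3 * d) * sin (3 * d) < 9 * (d * d)) by nra.
  assert (B : (K + 3 * K2) * d <= eps).
  { apply (Rmult_le_compat_l (K + 3 * K2)) in Hd3; [|lra].
    unfold Rdiv in Hd3. rewrite <- Rmult_assoc, (Rmult_comm _ eps), Rmult_assoc, Rinv_r, Rmult_1_r in Hd3; lra. }
  assert (d * d <= d) by nra.
  assert (K * sin (1 * d) * sin (1 * d) < K * (d * d)).
  { rewrite Rmult_assoc. apply Rmult_lt_compat_l; lra. }
  assert (K2 * sin (3 * d) * sin (3 * d) < K2 * (9 * (d * d))).
  { rewrite Rmult_assoc. apply Rmult_lt_compat_l; lra. }
  assert (K * (d*d) + 3 * K2 * (d*d) <= (K + 3 * K2) * d) by nra.
  unfold Rdiv. rewrite Rinv_1.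
  lra.
Qed.

Theorem theorem4 (m : nat) (hm : (1 <= m)%nat) :
  (forall (n : nat) (x y : R), (1 <= n)%nat ->
     0 < x < PI -> 0 < y < PI -> 0 < Ssum m n x y) /\
  (forall eps : R, 0 < eps ->
     exists (n : nat) (x y : R), (1 <= n)%nat /\ 0 < x < PI /\ 0 < y < PI /\
       Ssum m n x y < eps).
Proof.
  split.
  - intros n x y Hn Hx Hy.
    replace (Ssum m n x y) with ((Fn m n (x - y) - Fn m n (x + y)) / 2).
    2:{ unfold Ssum, Fn. symmetry.
        apply (Ssum_eq (fun k => Binomial.C (n - k + m) m) (fun k => INR (2 * k + 1)) a_nz n x y). }
    assert (HPI := PI_RGT_0).
    assert (Hu : exists u, Fn m n (x - y) = Fn m n u /\ 0 <= u /\ u < x + y /\ u < 2 * PI - (x + y)).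
    { destruct (Rle_lt_dec y x).
      - exists (x - y). split; [reflexivity|]. lra.
      - exists (y - x). split. replace (x - y) with (- (y - x)) by ring. apply Fn_neg. lra. }
    destruct Hu as [u [Eu [Hu1 [Hu2 Hu3]]]]. rewrite Eu.
    destruct (Rle_lt_dec (x + y) PI).
    + assert (Fn m n (x + y) < Fn m n u) by (apply Fn_decr; auto). lra.
    + rewrite <- (Fn_refl m n (x + y)).
      assert (Fn m n (2 * PI - (x + y)) < Fn m n u) by (apply Fn_decr; auto; lra). lra.
  - intros eps He. destruct (part2 m eps He) as [n [x [y H]]].
    exists n, x, y. exact H.
Qed.
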